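(* Let $(q_{i,j})_{i,j\in\mathbb Z^{\geq 0}}$ be the array defined greedily by $q_{i,j}=\operatorname{mex}(\{q_{i,k}+q_{l,j}-q_{l,k}\mid 0\leq l<i,\ 0\leq k<j\}\cap\mathbb Z^{\geq 0})$, so that $q_{0,j}=0$ and $q_{1,j}=j$. Put $q_j=q_{2,j}$, and for $j\in\mathbb Z^{\geq 0}$ let $S_j=\{q_{2,k}+q_{l,j}-q_{l,k}\mid 0\le l<2,\ 0\le k<j\}\cap\mathbb Z^{\ge 0}$ (so $q_j=\operatorname{mex}(S_j)$), $U_j=\{q_k\mid 0\leq k<j\}$ and $W_j=\{q_k+j-k\mid 0\leq k<j\}$. For $j\in\mathbb N$ let $n(j)=\max\{k\mid\{0,1,\dots,k\}\subseteq U_j\}$, write $U_j=\{0,1,\dots,n(j),z_{j,1},\dots,z_{j,j-n(j)-1}\}$ with $n(j)+2\le z_{j,1}<\dots<z_{j,j-n(j)-1}$, and let $m(j)=\lfloor\varphi j\rfloor-j+1$. Then for every $j\in\mathbb Z^{\geq 0}$: (i) if $j\geq1$, $W_j=\{m(j),m(j)+1,\dots,\lfloor\varphi j\rfloor\}$; (ii) if $j\geq1$, $z_{j,i}=b(k_j+i-1)$ for all $i\in\{1,\dots,j-n(j)-1\}$, where $k_j$ is the least natural number with $b(k_j)>n(j)$; (iii) if $j\geq1$ and $j\in T_1$, then $n(j)=m(j)-2$; (iv) if $j\geq1$ and $j\in T_2$, then $n(j)=m(j)-1$; (v) if $j\ge1$ and $j\in T_3$, then $n(j)=m(j)$; (vi)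 $S_j=\emptyset$ if $j=0$; $S_j=\{0,1,\dots,\lfloor\varphi j\rfloor\}$ if $j\in A$; $S_j=\{0,1,\dots,\lfloor\varphi j\rfloor\}\setminus\{\lfloor(\varphi-1)j\rfloor\}$ if $j\in B$; (vii) $q_j=0$ if $j=0$; $q_j=\lfloor\varphi j\rfloor+1$ if $j\in A$; $q_j=\lfloor(\varphi-1)j\rfloor$ if $j\in B$.
   Context: $\mathbb N=\{1,2,\dots\}$, $\mathbb Z^{\ge0}=\{0,1,2,\dots\}$, $\varphi=\frac{1+\sqrt5}{2}$, $a(n)=\lfloor n\varphi\rfloor$, $b(n)=\lfloor n\varphi^2\rfloor$, $A=\{a(n)\mid n\in\mathbb N\}$, $B=\{b(n)\mid n\in\mathbb N\}$. $T_1=\{b(n)\mid n\in\mathbb N\}$, $T_2=\{b(n)-1\mid n\in\mathbb N\}$, $T_3=\{2a(n)+n\mid n\in\mathbb N\}$. For $X\subseteq\mathbb Z^{\ge0}$, $\operatorname{mex}(X)=\min(\mathbb Z^{\ge0}\setminus X)$. *)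

(* Defs.v *)
From Stdlib Require Import Reals.
From mathcomp Require Import all_boot.

Set Implicit Arguments.
Unset Strict Implicit.
Unset Printing Implicit Defensive.

Open Scope R_scope.
Definition phi : R := (1 + sqrt 5) / 2.

(* floor of a nonnegative real, as a nat ([Int_part] is the floor in Stdlib) *)
Definition nfloor (x : R) : nat := Z.to_nat (Int_part x).

Definition a (n : nat) : nat := nfloor (INR n * phi).
Definition b (n : nat) : nat := nfloor (INR n * (phi ^ 2)).
Definition floor_phi1 (j : nat) : nat := nfloor (INR j * (phi - 1)).
Close Scope R_scope.

Definition inA (j : nat) : Prop := exists n, 1 <= n /\ j = a n.
Definition inB (j : nat) : Prop := exists n, 1 <= n /\ j = b n.
Definition inT1 (j : nat) : Prop := exists n, 1 <= n /\ j = b n.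
Definition inT2 (j : nat) : Prop := exists n, 1 <= n /\ j = b n - 1.
Definition inT3 (j : nat) : Prop := exists n, 1 <= n /\ j = 2 * a n + n.

(* mex of a finite list of naturals: least n not in s (it is <= size s). *)
Definition mex (s : seq nat) : nat :=
  find (fun n => n \notin s) (iota 0 (size s).+1).

(* The candidate set {q_{i,k} + q_{l,j} - q_{l,k} | l < i, k < j} ∩ Z_{>=0},
   for an array Q; the integer difference is kept only when nonnegative. *)
Definition cand (Q : nat -> nat -> nat) (i j : nat) : seq nat :=
  [seq Q i p.2 + Q p.1 j - Q p.1 p.2 |
     p <- [seq (l, k) | l <- iota 0 i, k <- iota 0 j]
     & Q p.1 p.2 <= Q i p.2 + Q p.1 j].

(* Construction: [prev] = list of the rows 0..i-1, [pre] = q_{i,0..j-1}. *)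
Definition next_entry (prev : seq (nat -> nat)) (pre : seq nat) : nat :=
  let i := size prev in
  let j := size pre in
  let Q := fun l k => if l == i then nth 0 pre k
                      else nth (fun _ => 0) prev l k in
  mex (cand Q i j).

Fixpoint row_pref (prev : seq (nat -> nat)) (j : nat) : seq nat :=
  if j is j'.+1 then
    let pre := row_pref prev j' in rcons pre (next_entry prev pre)
  else [::].

Definition row (prev : seq (nat -> nat)) (j : nat) : nat :=
  nth 0 (row_pref prev j.+1) j.

Fixpoint rows (i : nat) : seq (nat -> nat) :=
  if i is i'.+1 then rcons (rows i') (row (rows i')) else [::].

Definition q (i j : nat) : nat := row (rows i) j.

Definition inS (j x : nat) : Prop :=
  exists l k, l < 2 /\ k < j /\ q l k <= q 2 k + q l j /\
              x = q 2 k + q l j - q l k.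

Definition Useq (j : nat) : seq nat := [seq q 2 k | k <- iota 0 j].
Definition inW (j x : nat) : Prop := exists k, k < j /\ x = q 2 k + j - k.

(* n(j) = max {k | {0,...,k} ⊆ U_j}  (meaningful for j >= 1) *)
Definition nU (j : nat) : nat :=
  \max_(k < j.+1 | all (fun x => x \in Useq j) (iota 0 k.+1)) k.

Definition zseq (j : nat) : seq nat :=
  sort leq (undup [seq x <- Useq j | nU j < x]).
Definition z (j i : nat) : nat := nth 0 (zseq j) i.-1.

Definition m (j : nat) : nat := a j - j + 1.

(* Main.v *)
Require Import Defs.
From Stdlib Require Import Reals.
From mathcomp Require Import all_boot.
From Stdlib Require Import Lra Lia Psatz ZArith.
From mathcomp Require Import all_boot.
From mathcomp Require Import zify.
Delimit Scope R_scope with Re.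

Lemma no_sq5 (n k : nat) : (0 < n)%N -> (5 * (n * n))%N <> (k * k)%N.
Proof.
move=> n0 E.
have k0 : (0 < k)%N by case: k E => [|k]; rewrite ?muln0 => E; [lia|].
have := congr1 (logn 5) E.
rewrite lognM // ?muln_gt0 ?n0 // !lognM //.
have -> : logn 5 5 = 1%N by [].
lia.
Qed.
Local Open Scope R_scope.

Lemma nfloor_spec (r : R) (x : nat) : INR x <= r < INR x + 1 -> nfloor r = x.
Proof.
move=> [h1 h2]; rewrite /nfloor /Int_part.
have -> : up r = (Z.of_nat x + 1)%Z.
  symmetry; apply: tech_up; rewrite plus_IZR -INR_IZR_INZ /=; lra.
rewrite Z.add_simpl_r; apply: Nat2Z.id.
Qed.

Lemma nfloor_bounds (r : R) : 0 <= r -> INR (nfloor r) <= r < INR (nfloor r) + 1.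
Proof.
move=> r0; have [h1 h2] := base_Int_part r.
have z0 : (0 <= Int_part r)%Z.
  have : (-1 < Int_part r)%Z by apply: lt_IZR; rewrite /=; lra.
  lia.
rewrite /nfloor INR_IZR_INZ Z2Nat.id //; lra.
Qed.

Lemma sqrt5_sq : sqrt 5 * sqrt 5 = 5.
Proof. apply: sqrt_sqrt; lra. Qed.

Lemma sqrt5_pos : 0 <= sqrt 5.
Proof. apply: sqrt_pos. Qed.

Lemma phi_sq : phi * phi = phi + 1.
Proof. rewrite /phi. have := sqrt5_sq. nra. Qed.

Lemma phi_lo : 1.618 < phi.
Proof. rewrite /phi. have := sqrt5_sq. have := sqrt5_pos. nra. Qed.

Lemma phi_hi : phi < 1.6181.
Proof. rewrite /phi. have := sqrt5_sq. have := sqrt5_pos. nra. Qed.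

Lemma phi_irr (n x : nat) : (0 < n)%N -> INR n * phi <> INR x.
Proof.
move=> n0 E.
have s0 := sqrt5_pos; have s5 := sqrt5_sq.
have hn : 1 <= INR n by apply: (le_INR 1); apply/leP.
have E2 : INR n * sqrt 5 = 2 * INR x - INR n by move: E; rewrite /phi; lra.
have le : (n <= 2 * x)%N.
  apply/leP; apply: INR_le; rewrite mult_INR /=; nra.
have : INR (5 * (n * n)) = INR ((2 * x - n) * (2 * x - n)).
  rewrite !mult_INR minus_INR; last by apply/leP.
  rewrite mult_INR /=.
  have : (INR n * sqrt 5) * (INR n * sqrt 5) = 5 * INR n * INR n by nra.
  rewrite E2; lra.
move/INR_eq; exact: no_sq5.
Qed.

Lemma INR_addn m n : INR (m + n)%N = INR m + INR n.
Proof. exact: plus_INR. Qed.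
Lemma INR_muln m n : INR (m * n)%N = INR m * INR n.
Proof. exact: mult_INR. Qed.
Lemma INR_subn m n : (n <= m)%N -> INR (m - n)%N = INR m - INR n.
Proof. move/leP=> h; exact: minus_INR. Qed.
Lemma INR_1 : INR 1 = 1. Proof. by []. Qed.
Lemma INR_ge1 n : (0 < n)%N -> 1 <= INR n.
Proof. move=> h; apply: (le_INR 1); exact/leP. Qed.

Lemma nfloor_lt r x : 0 <= r -> (nfloor r < x)%N <-> r < INR x.
Proof.
move=> r0; have [h1 h2] := nfloor_bounds r r0; split.
- move=> /leP /le_INR; rewrite S_INR; lra.
- move=> h; apply/leP; apply: INR_lt; lra.
Qed.

Lemma nfloor_le r x : 0 <= r -> (x <= nfloor r)%N <-> INR x <= r.
Proof.
move=> r0; have := nfloor_lt r x r0; case: leqP => h [i1 i2]; split => //.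
- move=> _; apply: Rnot_lt_le => /i2; by [].
- move=> H; have := i1 isT; lra.
Qed.

Lemma phi_pos : 0 < phi. Proof. have := phi_lo; lra. Qed.

Lemma a_bounds n : INR (a n) <= INR n * phi < INR (a n) + 1.
Proof. apply: nfloor_bounds; have := pos_INR n; have := phi_pos; nra. Qed.

Lemma a_strict n : (0 < n)%N -> INR (a n) < INR n * phi.
Proof.
move=> n0; have [h _] := a_bounds n; case: h => // h.
by have := phi_irr n (a n) n0; rewrite h.
Qed.

Lemma a_eq n x : INR x <= INR n * phi < INR x + 1 -> a n = x.
Proof. exact: nfloor_spec. Qed.

Lemma a_lt n x : (a n < x)%N <-> INR n * phi < INR x.
Proof. apply: nfloor_lt; have := pos_INR n; have := phi_pos; nra. Qed.

Lemma a_le n x : (x <= a n)%N <-> INR x <= INR n * phi.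
Proof. apply: nfloor_le; have := pos_INR n; have := phi_pos; nra. Qed.

Lemma nphi2 n : INR n * phi * phi = INR n * phi + INR n.
Proof. rewrite Rmult_assoc phi_sq; ring. Qed.

Lemma b_eq n : b n = (a n + n)%N.
Proof.
rewrite /b; have [h1 h2] := a_bounds n.
apply: nfloor_spec; rewrite INR_addn /= Rmult_1_r -Rmult_assoc nphi2; lra.
Qed.

Lemma a_ge n : (n <= a n)%N.
Proof. apply/a_le; have := pos_INR n; have := phi_lo; nra. Qed.

Lemma floor_phi1_eq j : floor_phi1 j = (a j - j)%N.
Proof.
rewrite /floor_phi1; have [h1 h2] := a_bounds j.
apply: nfloor_spec; rewrite INR_subn ?a_ge //; lra.
Qed.

Lemma phi3 : phi * phi * phi = 2 * phi + 1.
Proof. rewrite phi_sq; have := phi_sq; nra. Qed.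

Ltac phis := have := phi_sq; have := phi_lo; have := phi_hi; have := phi3.

Lemma a_a n : (0 < n)%N -> a (a n) = (a n + n - 1)%N.
Proof.
move=> n0; apply: a_eq.
have := a_strict _ n0; have := a_bounds n; have := nphi2 n; have := INR_ge1 _ n0.
rewrite INR_subn ?INR_addn /=; last by lia.
phis; nra.
Qed.

Lemma a_b n : a (b n) = (a n + b n)%N.
Proof.
rewrite b_eq; apply: a_eq.
have := a_bounds n; have := nphi2 n; have := pos_INR n.
rewrite !INR_addn.
phis; nra.
Qed.

Lemma a_a1 n : a (a n + 1) = (a n + n + 1)%N.
Proof.
apply: a_eq.
have := a_bounds n; have := nphi2 n; have := pos_INR n.
rewrite !INR_addn /=.
phis; nra.
Qed.

Lemma a_bm1 n : (0 < n)%N -> a (b n - 1) = (a n + b n - 2)%N.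
Proof.
move=> n0; rewrite b_eq; have := a_ge n; move=> hge.
apply: a_eq.
have := a_strict _ n0; have := a_bounds n; have := nphi2 n; have := INR_ge1 _ n0.
rewrite !INR_subn ?INR_addn /=; try lia.
phis; nra.
Qed.

Lemma ab_disj n m : (0 < n)%N -> (0 < m)%N -> a n <> b m.
Proof.
move=> n0 m0 E; rewrite b_eq in E.
have h1 := a_strict _ n0; have h2 := a_bounds n; have h3 := a_strict _ m0; have h4 := a_bounds m.
have e1 := nphi2 n; have e2 := nphi2 m.
rewrite E INR_addn in h1 h2.
set X := INR (a m) in h1 h2 h3 h4 *.
have k1 : INR n + INR m > X + INR m.
  have : (INR n * phi - X - INR m) * (phi - 1) > 0 by phis; nra.
  phis; nra.
have k2 : INR n + INR m < X + INR m + 1.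
  have : (X + INR m + 1 - INR n * phi) * (phi - 1) > 0 by phis; nra.
  phis; nra.
have l1 : (a m + m < n + m)%N by apply/leP; apply: INR_lt; rewrite !INR_addn.
have l2 : (n + m < a m + m + 1)%N by apply/leP; apply: INR_lt; rewrite !INR_addn /=.
lia.
Qed.

Lemma ab_cover x : (0 < x)%N ->
  (exists n, (0 < n)%N /\ a n = x) \/ (exists n, (0 < n)%N /\ b n = x).
Proof.
move=> x0.
have hge := a_ge (x + 1).
set n := (a (x + 1) - (x + 1))%N.
have hb := a_bounds (x + 1); have hs := a_strict (x + 1) (ltac:(by rewrite addn1) : (0 < x + 1)%N).
have hN : INR n = INR (a (x + 1)) - INR x - 1.
  rewrite /n INR_subn // INR_addn /=; lra.
have ex := nphi2 (x + 1); rewrite INR_addn /= in hb hs ex.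
have en := nphi2 n.
have hx1 := INR_ge1 _ x0.
have up1 : (INR n + 1) * phi > INR x + 1.
  have : (INR n + 1 - (INR x + 1) * (phi - 1)) * phi > 0 by phis; nra.
  phis; nra.
have lo1 : INR n < (INR x + 1) * (phi - 1) by phis; nra.
have lo2 : INR n * phi < INR x + 1.
  have : ((INR x + 1) * (phi - 1) - INR n) * phi > 0 by phis; nra.
  phis; nra.
case: (Rlt_or_le (INR x) (INR n * phi)) => hc.
- left; exists n; split.
    case: (posnP n) => // n00; rewrite n00 /= in hc; lra.
  apply: a_eq; lra.
- have nlt : (n < x)%N.
    apply/leP; apply: INR_lt; have := pos_INR n; phis; nra.
  right; exists (x - n)%N; split; first by lia.
  rewrite b_eq.
  suff -> : a (x - n) = n by lia.
  apply: a_eq; rewrite INR_subn; last by lia.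
  phis; nra.
Qed.

Local Close Scope R_scope.

Lemma size_row_pref prev j : size (row_pref prev j) = j.
Proof. by elim: j => //= j IH; rewrite size_rcons IH. Qed.

Lemma row_next prev j : row prev j = next_entry prev (row_pref prev j).
Proof.
by rewrite /row /= nth_rcons size_row_pref ltnn eqxx.
Qed.

Lemma row_pref_mk prev j : row_pref prev j = mkseq (row prev) j.
Proof.
elim: j => // j IH; rewrite [LHS]/= -row_next IH /mkseq -addn1 iotaD map_cat /=.
by rewrite add0n cats1.
Qed.

Lemma size_rows i : size (rows i) = i.
Proof. by elim: i => //= i IH; rewrite size_rcons IH. Qed.

Lemma nth_rows i l : l < i -> nth (fun _ => 0) (rows i) l = q l.
Proof.
elim: i => // i IH; rewrite ltnS leq_eqVlt => /orP [/eqP ->|h] /=.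
  by rewrite nth_rcons size_rows ltnn eqxx.
by rewrite nth_rcons size_rows h IH.
Qed.

Lemma in_cand Q i j y : y \in cand Q i j <->
  exists l k, l < i /\ k < j /\ Q l k <= Q i k + Q l j /\ y = Q i k + Q l j - Q l k.
Proof.
rewrite /cand; split.
- case/mapP => [[l k]]; rewrite mem_filter /= => /andP [hle] /allpairsP [[l' k'] [/= hl hk [el ek]]] ->.
  move: hl hk; rewrite !mem_iota !add0n => hl hk; subst.
  by exists l', k'.
- move=> [l [k [hl [hk [hle ->]]]]].
  apply/mapP; exists (l, k) => //; rewrite mem_filter /= hle /=.
  by apply/allpairsP; exists (l, k); rewrite /= !mem_iota !add0n.
Qed.

Lemma find_iota (P : pred nat) m n x :
  (forall y, m <= y < x -> ~~ P y) -> P x -> m <= x < m + n ->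
  find P (iota m n) = x - m.
Proof.
elim: n m => [|n IH] m hlt hx hr; first by lia.
rewrite /= ; case: (boolP (P m)) => hm.
  have : ~~ (m < x) by apply/negP => h; move: (hlt m); rewrite leqnn h => /(_ isT); rewrite hm.
  lia.
have mx : m < x by case: (ltngtP m x) => // e; [lia | by move: hm; rewrite e hx].
rewrite (IH m.+1) //; first by lia.
- by move=> y hy; apply: hlt; lia.
- lia.
Qed.

Lemma mex_spec s x : (forall y, y < x -> y \in s) -> x \notin s -> mex s = x.
Proof.
move=> hlt hx; rewrite /mex.
have xle : x <= size s.
  have : uniq (iota 0 x) by apply: iota_uniq.
  move/uniq_leq_size => /(_ s); rewrite size_iota; apply => y.
  by rewrite mem_iota add0n => /hlt.
rewrite (@find_iota _ 0 _ x) ?subn0 //.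
- by move=> y /andP [_ /hlt] ->.
Qed.

Definition inCand i j y := exists l k, l < i /\ k < j /\
  q l k <= q i k + q l j /\ y = q i k + q l j - q l k.

Lemma cand_ext Q i j y : (forall l, l < i -> Q l = q l) ->
  (forall k, k < j -> Q i k = q i k) -> (y \in cand Q i j <-> inCand i j y).
Proof.
move=> h1 h2; rewrite in_cand; split.
- move=> [l [k [hl [hk [hle ->]]]]]; exists l, k.
  by rewrite (h1 l hl) (h2 k hk) in hle *; do !split.
- move=> [l [k [hl [hk [hle ->]]]]]; exists l, k.
  by rewrite (h1 l hl) (h2 k hk) in hle *; do !split.
Qed.

Lemma q_char i j x : (forall y, y < x -> inCand i j y) -> ~ inCand i j x -> q i j = x.
Proof.
move=> hlt hx; rewrite /q row_next /next_entry size_rows size_row_pref.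
cbv zeta.
apply: mex_spec.
- move=> y /hlt; rewrite cand_ext //.
  + by move=> l hl; rewrite ltn_eqF // nth_rows.
  + by move=> k hk; rewrite eqxx row_pref_mk nth_mkseq.
- apply/negP; rewrite cand_ext //.
  + by move=> l hl; rewrite ltn_eqF // nth_rows.
  + by move=> k hk; rewrite eqxx row_pref_mk nth_mkseq.
Qed.

Lemma q0 j : q 0 j = 0.
Proof. apply: q_char => // -[l [k [//]]]. Qed.

Lemma q1 j : q 1 j = j.
Proof.
elim/ltn_ind: j => j IH; apply: q_char.
- move=> y hy; exists 0, y; rewrite !q0 IH // !addn0 subn0; do !split => //.
- move=> [l [k [hl [hk [_ e]]]]].
  move: hl e; rewrite ltnS leqn0 => /eqP ->; rewrite !q0 IH // addn0 subn0 => e.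
  by move: hk; rewrite e ltnn.
Qed.

Lemma inS_iff j x : inS j x <->
  (exists k, k < j /\ x = q 2 k) \/ (exists k, k < j /\ x = q 2 k + j - k).
Proof.
split.
- move=> [l [k [hl [hk [_ e]]]]].
  move: hl; rewrite ltnS leq_eqVlt ltnS leqn0 => /orP [] /eqP el; subst l.
  + by right; exists k; split => //; rewrite e !q1.
  + by left; exists k; split => //; rewrite e !q0 addn0 subn0.
- move=> [[k [hk e]]|[k [hk e]]].
  + exists 0, k; rewrite !q0 addn0 subn0; do !split => //.
  + exists 1, k; rewrite !q1; do !split => //; lia.
Qed.

Set Implicit Arguments.
Unset Strict Implicit.

Lemma ltR x y : x < y -> (INR x < INR y)%Re.
Proof. by move/ltP; apply: lt_INR. Qed.
Lemma leR x y : x <= y -> (INR x <= INR y)%Re.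
Proof. by move/leP; apply: le_INR. Qed.
Lemma Rlt_n x y : (INR x < INR y)%Re -> x < y.
Proof. by move/INR_lt/ltP. Qed.
Lemma Rle_n x y : (INR x <= INR y)%Re -> x <= y.
Proof. by move/INR_le/leP. Qed.

Lemma a0 : a 0 = 0.
Proof. apply: a_eq; rewrite /=; lra. Qed.
Lemma a1 : a 1 = 1.
Proof. apply: a_eq; rewrite /=; have := phi_lo; have := phi_hi; lra. Qed.
Lemma b0 : b 0 = 0.
Proof. by rewrite b_eq a0. Qed.

Lemma a_mono n m : n < m -> a n < a m.
Proof.
move=> h; apply/a_lt; have := a_bounds m; have := a_bounds n; have := leR h.
rewrite S_INR; have := phi_lo; nra.
Qed.

Lemma b_mono n m : n < m -> b n < b m.
Proof. move=> h; rewrite !b_eq; have := a_mono h; lia. Qed.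

Lemma a_inj n m : a n = a m -> n = m.
Proof.
move=> e; case: (ltngtP n m) => // h; have := a_mono h; rewrite e ltnn //.
Qed.
Lemma b_inj n m : b n = b m -> n = m.
Proof.
move=> e; case: (ltngtP n m) => // h; have := b_mono h; rewrite e ltnn //.
Qed.
Lemma a_le_mono n m : (a n <= a m) = (n <= m).
Proof.
case: (leqP n m) => h.
- move: h; rewrite leq_eqVlt => /orP [/eqP ->|h]; [by rewrite leqnn | by rewrite (ltnW (a_mono h))].
- by rewrite leqNgt (a_mono h).
Qed.
Lemma a_lt_mono n m : (a n < a m) = (n < m).
Proof. by rewrite !ltnNge a_le_mono. Qed.
Lemma b_le_mono n m : (b n <= b m) = (n <= m).
Proof. by rewrite !b_eq; have := a_le_mono n m; lia. Qed.
Lemma b_lt_mono n m : (b n < b m) = (n < m).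
Proof. by rewrite !ltnNge b_le_mono. Qed.

Lemma J1 j n : 0 < n -> (a n < j) <-> (n + j <= a j).
Proof.
move=> n0; rewrite a_lt a_le INR_addn.
have := a_bounds j; have := nphi2 n; have := nphi2 j; have := INR_ge1 _ n0.
have := pos_INR j.
split => [h|h].
- have : ((INR j - INR n * phi) * (phi - 1) > 0)%Re by phis; nra.
  phis; nra.
- have hs : (INR n + INR j < INR j * phi)%Re.
    case: h => // h; case: (posnP j) => [j0|j0].
      by move: h; rewrite j0 /= => h; nra.
    by have := phi_irr _ (n + j) j0; rewrite INR_addn h.
  have : ((INR j * phi - INR n - INR j) * phi > 0)%Re by phis; nra.
  phis; nra.
Qed.

Lemma b_lt n x : (b n < x) <-> (INR n * phi * phi < INR x)%Re.
Proof.
rewrite b_eq nphi2; have := a_bounds n; split => [h|h].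
- have := leR h; rewrite S_INR INR_addn; lra.
- apply: Rlt_n; rewrite INR_addn; lra.
Qed.

Lemma INR2 j : INR (2 * j) = (2 * INR j)%Re.
Proof. by rewrite INR_muln. Qed.

Lemma J2 j n : 0 < n -> (b n < j) <-> (n + a j < 2 * j).
Proof.
move=> n0; rewrite b_lt.
have := a_bounds j; have := nphi2 n; have := nphi2 j; have := INR_ge1 _ n0.
have := pos_INR j.
split => [h|h].
- apply: Rlt_n; rewrite INR_addn INR2.
  have : ((INR j - INR n * phi * phi) * (2 - phi) > 0)%Re by phis; nra.
  phis; nra.
- have := leR h; rewrite S_INR INR_addn INR2 => h'.
  have : ((2 * INR j - INR j * phi - INR n) * (phi * phi) > 0)%Re by phis; nra.
  phis; nra.
Qed.

Definition isA j := has (fun n => a n == j) (iota 1 j).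

Lemma isAP j : reflect (inA j) (isA j).
Proof.
apply: (iffP hasP).
- move=> [n]; rewrite mem_iota => /andP [h1 _] /eqP <-; by exists n.
- move=> [n [h1 ->]]; exists n => //; rewrite mem_iota h1 /=.
  by have := a_ge n; lia.
Qed.

Definition f j := if isA j then a j + 1 else a j - j.

Lemma classify j : j = 0 \/ (exists p, 0 < p /\ j = a p) \/ (exists p, 0 < p /\ j = b p).
Proof.
case: (posnP j) => [->|j0]; first by left.
by case: (ab_cover _ j0) => [[p [h e]]|[p [h e]]]; right; [left|right]; exists p.
Qed.

Lemma notA_b p : 0 < p -> ~ inA (b p).
Proof. by move=> p0 [n [n0 e]]; apply: (ab_disj n p n0 p0). Qed.

Lemma f0 : f 0 = 0.
Proof. by rewrite /f /= a0. Qed.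

Lemma f_a p : 0 < p -> f (a p) = b p.
Proof.
move=> p0; rewrite /f; case: isAP => [_|[]]; last by exists p.
rewrite a_a // b_eq; have := a_ge p; lia.
Qed.

Lemma f_b p : 0 < p -> f (b p) = a p.
Proof.
move=> p0; rewrite /f; case: isAP => [/(notA_b p0) //|_].
rewrite a_b; lia.
Qed.

Lemma b_gt_a p : 0 < p -> a p < b p.
Proof. rewrite b_eq; lia. Qed.

Lemma f_inj (x y : nat) : f x = f y -> x = y.
Proof.
case: (classify x) => [->|[[p [p0 ->]]|[p [p0 ->]]]];
case: (classify y) => [->|[[r [r0 ->]]|[r [r0 ->]]]];
rewrite ?f0 ?f_a ?f_b //; rewrite ?b_eq ?a0.
all: try (have := a_ge p; have := a_ge r; lia).
all: try (move/a_inj => -> //).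
all: try (move=> e; have : b p = b r by rewrite !b_eq; lia).
all: try (move/b_inj => -> //).
all: try (move=> e; have := ab_disj _ _ p0 r0; rewrite b_eq; lia).
all: try (move=> e; have := ab_disj _ _ r0 p0; rewrite b_eq; lia).
all: try (have := a_ge r; lia).
all: (have := a_ge p; lia).
Qed.

Lemma f_dif (x y : nat) : f x + y = f y + x -> x = y.
Proof.
case: (classify x) => [->|[[p [p0 ->]]|[p [p0 ->]]]];
case: (classify y) => [->|[[r [r0 ->]]|[r [r0 ->]]]];
rewrite ?f0 ?f_a ?f_b // ?b_eq ?a0 => e.
all: try (have epr : p = r; [lia | by rewrite epr]).
all: try (have := a_ge r; lia).
all: try (have := a_ge p; lia).
Qed.

Definition UF j y := exists k, k < j /\ y = f k.
Definition WF j y := exists k, k < j /\ y = f k + j - k.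

Lemma a_lt2 j : 0 < j -> a j < 2 * j.
Proof.
move=> j0; apply/a_lt; rewrite INR2; have := INR_ge1 _ j0; phis; nra.
Qed.

Lemma LW j y : 0 < j -> WF j y <-> (a j - j + 1 <= y <= a j).
Proof.
move=> j0; have h2 := a_lt2 j0; have hg := a_ge j.
split.
- move=> [k [hk ->]].
  case: (classify k) => [->|[[p [p0 ek]]|[p [p0 ek]]]]; try subst k.
  + rewrite f0; lia.
  + rewrite f_a //; have := (J1 j p0).1 hk; rewrite b_eq; lia.
  + rewrite f_b //; have := (J2 j p0).1 hk; rewrite b_eq; lia.
- move=> /andP [ylo yhi].
  case: (ltngtP y j) => hy.
  + have p0 : 0 < j - y by lia.
    have hb := (J2 j p0).2 (ltac:(lia)).
    exists (b (j - y)); split => //; rewrite f_b // b_eq; lia.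
  + have p0 : 0 < y - j by lia.
    have ha := (J1 j p0).2 (ltac:(lia)).
    exists (a (y - j)); split => //; rewrite f_a // b_eq; lia.
  + by exists 0; split => //; rewrite f0 hy; lia.
Qed.

Lemma aux1 p j : a p + j < a j -> p + a j < 2 * j.
Proof.
move=> h; have := leR h; rewrite S_INR !INR_addn => h'.
have := a_bounds p; have := a_bounds j; have := nphi2 p; have := nphi2 j.
have := pos_INR p; have := pos_INR j => *.
apply: Rlt_n; rewrite INR_addn INR2.
have : ((INR j * phi - INR j - INR p * phi) * (phi - 1) > 0)%Re by phis; nra.
phis; nra.
Qed.

Lemma LU1 j y : 0 < j -> y < a j - j -> UF j y.
Proof.
move=> j0 hy; have hg := a_ge j.
case: (classify y) hy => [->|[[p [p0 ->]]|[p [p0 ->]]]] hy.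
- by exists 0; rewrite f0.
- exists (b p); rewrite f_b //; split => //; apply/(J2 j p0); apply: aux1; lia.
- exists (a p); rewrite f_a //; split => //; apply/(J1 j p0).
  move: hy; rewrite b_eq; have := a_ge p; lia.
Qed.

Lemma LU2 j : inA j -> UF j (a j - j).
Proof.
move=> [r [r0 ->]]; rewrite a_a //.
have -> : a r + r - 1 - a r = r - 1 by lia.
case: (posnP (r - 1)) => [->|r1]; first by exists 0; rewrite f0; split => //; have := a_ge r; lia.
case: (classify (r - 1)) => [e|[[p [p0 e]]|[p [p0 e]]]]; first by lia.
- exists (b p); rewrite f_b // -e; split => //.
  have hle : b p <= a r.
    apply/a_le; rewrite b_eq INR_addn.
    have : a p < r by lia.
    move/a_lt; have := a_bounds p; have := nphi2 p; have := nphi2 r; phis; nra.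
  rewrite ltn_neqAle hle andbT; apply/eqP => e'.
  by apply: (ab_disj _ _ r0 p0).
- exists (a p); rewrite f_a // -e; split => //.
  rewrite a_lt_mono; have := b_gt_a p0; have := a_ge p; lia.
Qed.

Lemma LUle j y : UF j y -> y <= a j.
Proof.
move=> [k [hk ->]].
case: (classify k) => [->|[[p [p0 ek]]|[p [p0 ek]]]]; try subst k.
- by rewrite f0.
- rewrite f_a //; have := a_a _ p0; have := a_mono hk; have := b_eq p; have := a_ge p; lia.
- rewrite f_b //; have := b_gt_a p0; have := a_ge j; lia.
Qed.

Lemma inS_UW j y : (forall k, k < j -> q 2 k = f k) -> (inS j y <-> UF j y \/ WF j y).
Proof.
move=> IH; rewrite inS_iff; split.
- move=> [[k [hk e]]|[k [hk e]]]; [left|right]; exists k; by rewrite -IH.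
- move=> [[k [hk e]]|[k [hk e]]]; [left|right]; exists k; by rewrite IH.
Qed.

Lemma fS_lt j y : y < f j -> UF j y \/ WF j y.
Proof.
case: (classify j) => [->|[[r [r0 ->]]|[r [r0 ->]]]].
- by rewrite f0.
- have ja : 0 < a r by have := a_ge r; lia.
  rewrite f_a // => hy.
  have hb : b r = a (a r) + 1 by rewrite a_a // b_eq; have := a_ge r; lia.
  case: (ltngtP y (a (a r) - a r)) => h.
  + by left; apply: LU1.
  + by right; apply/(LW y ja); lia.
  + by left; rewrite h; apply: LU2; exists r.
- have jb : 0 < b r by have := b_gt_a r0; lia.
  rewrite f_b // => hy; left; apply: LU1 => //.
  by rewrite a_b; lia.
Qed.

Lemma fS_not j : ~ (UF j (f j) \/ WF j (f j)).
Proof.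
move=> [[k [hk e]]|[k [hk e]]].
- by have := f_inj e => ek; move: hk; rewrite ek ltnn.
- have : f j + k = f k + j by lia.
  by move/f_dif => ek; move: hk; rewrite ek ltnn.
Qed.

Lemma q2f j : q 2 j = f j.
Proof.
elim/ltn_ind: j => j IH; apply: q_char.
- move=> y hy; change (inS j y); apply/(inS_UW y IH); exact: fS_lt.
- move=> h; change (inS j (f j)) in h; move/(inS_UW (f j) IH): h; exact: fS_not.
Qed.

Lemma Useq_mem j y : (y \in Useq j) <-> UF j y.
Proof.
rewrite /Useq; split.
- case/mapP => k; rewrite mem_iota add0n => hk ->; exists k; by rewrite q2f.
- move=> [k [hk ->]]; apply/mapP; exists k; by rewrite ?mem_iota ?add0n ?q2f.
Qed.

Lemma UF_char j y : 0 < j -> UF j y <->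
  y = 0 \/ (exists p, 0 < p /\ p + j <= a j /\ y = b p) \/
  (exists p, 0 < p /\ p + a j < 2 * j /\ y = a p).
Proof.
move=> j0; split.
- move=> [k [hk ->]].
  case: (classify k) hk => [->|[[p [p0 ->]]|[p [p0 ->]]]] hk.
  + by left; rewrite f0.
  + by right; left; exists p; rewrite f_a //; do !split => //; apply/(J1 j p0).
  + by right; right; exists p; rewrite f_b //; do !split => //; apply/(J2 j p0).
- move=> [->|[[p [p0 [h ->]]]|[p [p0 [h ->]]]]].
  + by exists 0; rewrite f0.
  + by exists (a p); rewrite f_a //; split => //; apply/(J1 j p0).
  + by exists (b p); rewrite f_b //; split => //; apply/(J2 j p0).
Qed.

Lemma K1 j : 0 < j -> a (2 * j - a j) <= j.
Proof.
move=> j0; have h2 := a_lt2 j0.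
case: (ltngtP j 1) => hj; first by lia.
- rewrite -ltnS; apply/a_lt; rewrite INR_subn; last by lia.
  rewrite INR2 S_INR.
  have := a_strict _ j0; have := a_bounds j; have := nphi2 j; have := leR hj => /= hj'.
  move=> *.
  have : ((INR (a j) - (INR j * phi - 1)) * phi > 0)%Re by phis; nra.
  phis; nra.
- by rewrite hj a1 (_ : 2 * 1 - 1 = 1) // a1.
Qed.

Lemma Kup N : 0 < N -> a N < b (a N - N + 1).
Proof.
move=> N0; have hg := a_ge N.
have hle : a N <= b (a N - N + 1).
  rewrite leqNgt; apply/negP => /b_lt.
  rewrite INR_addn INR_subn // /=.
  have := a_bounds N; have := nphi2 N; have := pos_INR N => *.
  have : ((INR (a N) - INR N + 1 - INR N * (phi - 1)) * (phi * phi) > 0)%Re by phis; nra.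
  phis; nra.
rewrite ltn_neqAle hle andbT; apply/eqP => e.
by apply: (ab_disj _ _ N0 (ltac:(lia) : 0 < a N - N + 1)).
Qed.

Lemma Klo N : 0 < N -> b (a N - N) < a N.
Proof.
move=> N0; have hg := a_ge N.
case: (posnP (a N - N)) => [->|r0]; first by rewrite b0; lia.
have hle : b (a N - N) <= a N.
  apply/a_le; rewrite b_eq INR_addn INR_subn //.
  have := a_bounds (a N - N); rewrite INR_subn // => hb.
  have := a_strict _ N0; have := a_bounds N; have := nphi2 N; have := pos_INR N => *.
  have : ((INR N * phi - INR N - (INR (a N) - INR N)) * (phi * phi) > 0)%Re by phis; nra.
  phis; nra.
rewrite ltn_neqAle hle andbT; apply/eqP => e.
by apply: (ab_disj _ _ N0 r0).
Qed.

Lemma K2 j n : 0 < j -> 0 < n -> b n < a (2 * j - a j) -> n + j <= a j.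
Proof.
move=> j0 n0 h; have h2 := a_lt2 j0; have hk := K1 j0.
set N := 2 * j - a j in h hk.
have N0 : 0 < N by rewrite /N; lia.
have hn : n <= a N - N.
  rewrite leqNgt; apply/negP => hr.
  have := Kup N0; rewrite -addn1 in hr; have := b_le_mono (a N - N + 1) n; rewrite hr.
  lia.
have eN : N = 2 * j - a j by []. 
have := a_ge N; lia.
Qed.

Lemma notU_aN j : 0 < j -> ~ UF j (a (2 * j - a j)).
Proof.
move=> j0; have h2 := a_lt2 j0; move/(UF_char _ j0).
set N := 2 * j - a j; have N0 : 0 < N by rewrite /N; lia.
move=> [e|[[p [p0 [h e]]]|[p [p0 [h e]]]]].
- have := a_ge N; lia.
- exact: (ab_disj _ _ N0 p0).
- have := a_inj e; rewrite /N; lia.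
Qed.

Lemma U_prefix j k : 0 < j -> all (fun x => x \in Useq j) (iota 0 k.+1) = (k < a (2 * j - a j)).
Proof.
move=> j0; have h2 := a_lt2 j0.
case: (ltnP k (a (2 * j - a j))) => hk.
- apply/allP => y; rewrite mem_iota add0n ltnS => hy.
  apply/Useq_mem/(UF_char _ j0).
  case: (classify y) => [->|[[p [p0 e]]|[p [p0 e]]]]; first by left.
  + right; right; exists p; do !split => //.
    have : a p < a (2 * j - a j) by lia.
    rewrite a_lt_mono; lia.
  + right; left; exists p; do !split => //.
    apply: K2 => //; lia.
- apply/negbTE/negP => /allP /(_ (a (2 * j - a j))).
  rewrite mem_iota add0n ltnS hk => /(_ isT) /Useq_mem.
  exact: notU_aN.
Qed.

Lemma nU_eq j : 0 < j -> nU j = a (2 * j - a j) - 1.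
Proof.
move=> j0; have hk := K1 j0; have h2 := a_lt2 j0.
set M := a (2 * j - a j) - 1.
have N1 : 0 < a (2 * j - a j) by have := a_ge (2 * j - a j); lia.
have Mlt : M < j.+1 by rewrite /M; lia.
apply/eqP; rewrite eqn_leq; apply/andP; split.
- apply/bigmax_leqP => i; rewrite U_prefix // => hi; rewrite /M; lia.
- apply: (bigmax_sup (Ordinal Mlt)) => //=.
  move: (U_prefix M j0) => /= ->; rewrite /M; lia.
Qed.

Lemma zseq_eq j : 0 < j ->
  zseq j = map b (iota (a (2 * j - a j) - (2 * j - a j) + 1)
                       ((a j - j) - (a (2 * j - a j) - (2 * j - a j)))).
Proof.
move=> j0; have hk := K1 j0; have h2 := a_lt2 j0; have hg := a_ge j.
set N := 2 * j - a j in hk *.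
have eN : N = 2 * j - a j by [].
have N0 : 0 < N by lia.
have hgN := a_ge N.
have hup := Kup N0; have hlo := Klo N0.
apply: (irr_sorted_eq ltn_trans ltnn).
- rewrite ltn_sorted_uniq_leq sort_uniq undup_uniq /=.
  exact: sort_sorted leq_total _.
- rewrite sorted_map; apply: sub_sorted (iota_ltn_sorted _ _).
  by move=> x y /=; rewrite b_lt_mono.
- move=> y; rewrite /zseq mem_sort mem_undup mem_filter nU_eq //.
  apply/idP/idP.
  + move=> /andP [hy /Useq_mem /(UF_char _ j0)]; rewrite -/N in hy; move: hy.
    move=> hy [e|[[p [p0 [h e]]]|[p [p0 [h e]]]]]; rewrite e in hy *.
    * lia.
    * apply/mapP; exists p => //; rewrite mem_iota.
      have : a N - N < p.
        rewrite ltnNge; apply/negP => hp.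
        have := b_le_mono p (a N - N); rewrite hp; lia.
      lia.
    * have : p < N by lia.
      rewrite -a_lt_mono; lia.
  + move=> /mapP [n]; rewrite mem_iota => /andP [hn1 hn2] ->.
    have n0 : 0 < n by lia.
    apply/andP; split.
    * rewrite -/N; have := b_le_mono (a N - N + 1) n; rewrite hn1; lia.
    * apply/Useq_mem/(UF_char _ j0); right; left; exists n; do !split => //; lia.
Qed.

Lemma fA j : inA j -> f j = a j + 1.
Proof. by rewrite /f => /isAP ->. Qed.
Lemma fB j : inB j -> f j = a j - j.
Proof. by move=> [p [p0 ->]]; rewrite /f; case: isAP => // /(notA_b p0). Qed.

Lemma inS_UW' j y : inS j y <-> UF j y \/ WF j y.
Proof. by apply: inS_UW => k _; rewrite q2f. Qed.

Theorem lemma5p5 (j : nat) :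
  (* (i) *)
  (1 <= j -> forall x, inW j x <-> m j <= x <= a j) /\
  (* (ii) U_j = {0..n(j)} ∪ {z_{j,1} < ... < z_{j,j-n(j)-1}}, z_{j,i} = b(k_j+i-1) *)
  (1 <= j ->
     size (zseq j) = j - nU j - 1 /\
     forall k, 1 <= k -> nU j < b k ->
       (forall k', 1 <= k' -> k' < k -> b k' <= nU j) ->
       forall i, 1 <= i <= j - nU j - 1 -> z j i = b (k + i - 1)) /\
  (* (iii) *)
  (1 <= j -> inT1 j -> nU j + 2 = m j) /\
  (* (iv) *)
  (1 <= j -> inT2 j -> nU j + 1 = m j) /\
  (* (v) *)
  (1 <= j -> inT3 j -> nU j = m j) /\
  (* (vi) *)
  (j = 0 -> forall x, ~ inS j x) /\
  (inA j -> forall x, inS j x <-> x <= a j) /\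
  (inB j -> forall x, inS j x <-> x <= a j /\ x <> floor_phi1 j) /\
  (* (vii) *)
  (j = 0 -> q 2 j = 0) /\
  (inA j -> q 2 j = a j + 1) /\
  (inB j -> q 2 j = floor_phi1 j).
Proof.
have hW : forall x, inW j x <-> WF j x.
  by move=> x; split => -[k [hk ->]]; exists k; rewrite q2f.
split; [|split; [|split; [|split; [|split; [|split; [|split; [|split; [|split; [|split]]]]]]]]].
-
  move=> j0 x; rewrite hW LW // /m; by [].
-
  move=> j0; have hk := K1 j0; have h2 := a_lt2 j0; have hg := a_ge j.
  have hN := nU_eq j0; rewrite zseq_eq //.
  set N := 2 * j - a j in hk hN *.
  have eN : N = 2 * j - a j by [].
  have N0 : 0 < N by lia.
  have hgN := a_ge N.
  have hup := Kup N0; have hlo := Klo N0.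
  split; first by rewrite size_map size_iota hN; lia.
  move=> k k1 hbk hmin i /andP [i1 i2].
  have ek : k = a N - N + 1.
    apply/eqP; rewrite eqn_leq; apply/andP; split.
    + rewrite leqNgt; apply/negP => hlt.
      have := hmin (a N - N + 1) (ltac:(lia)) hlt; lia.
    + rewrite leqNgt; apply/negP => hlt.
      have := b_le_mono k (a N - N); rewrite (_ : k <= a N - N) ?ltnS //; last by lia.
      lia.
  rewrite /z zseq_eq // -/N (nth_map 0); last by rewrite size_iota; lia.
  rewrite nth_iota; last by lia.
  congr b; lia.
-
  move=> j0 [p [p0 ej]]; rewrite ej in j0 *; rewrite nU_eq // /m. rewrite a_b.
  have := a_ge p; have := b_eq p => hb hp.
  have -> : 2 * b p - (a p + b p) = p by lia.
  lia.
-
  move=> j0 [p [p0 ej]]; rewrite ej in j0 *; rewrite nU_eq // /m a_bm1 //.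
  have := a_ge p; have := b_eq p => hb hp.
  have -> : 2 * (b p - 1) - (a p + b p - 2) = p by lia.
  lia.
-
  move=> j0 [p [p0 ej]]; rewrite ej in j0 *.
  have e1 : 2 * a p + p = a (b p) by rewrite a_b b_eq; lia.
  have bp0 : 0 < b p by rewrite b_eq; lia.
  rewrite nU_eq // /m e1 a_a; last by have := a_ge (b p); lia.
  rewrite a_b.
  have -> : 2 * (a p + b p) - (a p + b p + b p - 1) = a p + 1 by lia.
  rewrite a_a1 b_eq; lia.
-
  move=> -> x /inS_iff [[k [hk _]]|[k [hk _]]] //.
-
  move=> hA x; have j0 : 0 < j by case: hA => n [n0 ->]; have := a_ge n; lia.
  rewrite inS_UW'; split.
  + move=> [/LUle //|/(LW x j0) /andP [] //].
  + move=> hx; apply: fS_lt; rewrite fA //; lia.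
-
  move=> hB x; have j0 : 0 < j by case: hB => n [n0 ->]; rewrite b_eq; lia.
  have hf := fB hB; rewrite floor_phi1_eq inS_UW'; split.
  + move=> h; split.
    * by case: h => [/LUle //|/(LW x j0) /andP [] //].
    * by move=> e; apply: (@fS_not j); rewrite hf -e.
  + move=> [h1 h2]; case: (ltngtP x (a j - j)) => hx.
    * by apply: fS_lt; rewrite hf.
    * by right; apply/(LW x j0); lia.
    * by [].
-
  by move=> ->; rewrite q2f f0.
- by move=> hA; rewrite q2f fA.
- by move=> hB; rewrite q2f fB // floor_phi1_eq.
Qed.
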